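(* Let $A,W\in \mathbb{C}^{n\times n}$ and $m\in \mathbb{N}$. Then $(WA)^m+I_n-WAWA^{\mathrm{cEP},W}$ is invertible.
   Context: $\mathbb{C}^{n\times n}$ carries the conjugate transpose involution. With $k=\max\{\mathrm{ind}(AW),\mathrm{ind}(WA)\}$ (Drazin indices), the weighted core-EP inverse $A^{\mathrm{cEP},W}$ of $A$ is the unique $X$ with $WAWX=(WA)^k[(WA)^k]^{\dagger}$ and $\mathcal{R}(X)\subseteq\mathcal{R}((AW)^k)$, where $\dagger$ is the Moore–Penrose inverse and $\mathcal{R}$ the range. *)

(* Defs.v *)
(* Complex numbers are R[i] = complex R for R : realType
   (mathcomp-real-closed's complex numbers over a real-closed field; for a
   realType this is the field of complex numbers). *)
From HB Require Import structures.
From mathcomp Require Import all_boot all_order all_algebra.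
From mathcomp Require Import complex.
From mathcomp Require Import reals.
Set Implicit Arguments. Unset Strict Implicit. Unset Printing Implicit Defensive.
Import Order.TTheory GRing.Theory Num.Theory.
Local Open Scope ring_scope.

Section Defs.
Variable R : realType.
Local Notation C := R[i].

Definition ctrmx (n : nat) (A : 'M[C]_n) : 'M[C]_n := (map_mx Num.conj A)^T.

Definition is_mpinv (n : nat) (A X : 'M[C]_n) : Prop :=
  [/\ A *m X *m A = A, X *m A *m X = X,
      ctrmx (A *m X) = A *m X & ctrmx (X *m A) = X *m A].

(* Drazin index: smallest k with rank (B^k) = rank (B^(k+1)); it is <= n *)
Definition ind (n : nat) (B : 'M[C]_n) : nat :=
  find (fun k => \rank (B ^+ k) == \rank (B ^+ k.+1)) (iota 0 n.+1).

(* range (column space) inclusion R(X) ⊆ R(Y) *)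
Definition range_sub (n : nat) (X Y : 'M[C]_n) : Prop := (X^T <= Y^T)%MS.

(* X is the weighted core-EP inverse A^{cEP,W}:
   W A W X = (WA)^k [(WA)^k]^dagger  and  R(X) ⊆ R((AW)^k),
   with k = max(ind(AW), ind(WA)). *)
Definition is_wcEP (n : nat) (A W X : 'M[C]_n) : Prop :=
  let k := maxn (ind (A *m W)) (ind (W *m A)) in
  (forall Y, is_mpinv ((W *m A) ^+ k) Y ->
     W *m A *m W *m X = (W *m A) ^+ k *m Y)
  /\ range_sub X ((A *m W) ^+ k).

End Defs.

(* Main.v *)
Require Import Defs.
From HB Require Import structures.
From mathcomp Require Import all_boot all_order all_algebra.
From mathcomp Require Import complex.
From mathcomp Require Import reals.
Import GRing.Theory Num.Theory.
Local Open Scope ring_scope.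
Section S.
Variable R : realType.
Local Notation C := R[i].
Definition ct {m n} (A : 'M[C]_(m,n)) : 'M_(n,m) := (map_mx Num.conj A)^T.
Lemma ctM {m n p} (A : 'M[C]_(m,n)) (B : 'M_(n,p)) : ct (A *m B) = ct B *m ct A.
Proof. by rewrite /ct map_mxM trmx_mul. Qed.
Lemma ctK {m n} (A : 'M[C]_(m,n)) : ct (ct A) = A.
Proof. by apply/matrixP => i j; rewrite !mxE conjCK. Qed.
Lemma ct_inv {n} (A : 'M[C]_n) : ct (invmx A) = invmx (ct A).
Proof. by rewrite /ct map_invmx trmx_inv. Qed.
Lemma ct_eq0 {m n} (A : 'M[C]_(m,n)) : ct A *m A = 0 -> A = 0.
Proof.
move=> h; apply/matrixP => i j; rewrite mxE.
have := congr1 (fun M : 'M_n => M j j) h; rewrite !mxE => /psumr_eq0P H.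
have Hl : forall l : 'I_m, true -> 0 <= ct A j l * A l j.
  by move=> l _; rewrite !mxE mulrC mul_conjC_ge0.
have := H Hl i isT; rewrite !mxE mulrC => /eqP; rewrite mul_conjC_eq0 => /eqP //.
Qed.

Lemma inj_unit {r} (N : 'M[C]_r) : (forall Z : 'M_r, N *m Z = 0 -> Z = 0) -> N \in unitmx.
Proof.
move=> H; have := H _ (mulmx_coker N) => /eqP.
rewrite -mxrank_eq0 mxrank_coker subn_eq0 => h.
by rewrite -row_free_unit /row_free eqn_leq rank_leq_row h.
Qed.

Lemma mp_fact {n r} (F : 'M[C]_(n, r)) (G : 'M_(r, n)) :
  (ct F *m F) \in unitmx -> (G *m ct G) \in unitmx -> exists Y, is_mpinv (F *m G) Y.
Proof.
move=> FtF GGt.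
set S1 := invmx (ct F *m F); set S2 := invmx (G *m ct G).
exists (ct G *m S2 *m S1 *m ct F).
have E1 : G *m ct G *m S2 = 1%:M by rewrite mulmxV.
have E2 : S1 *m (ct F *m F) = 1%:M by rewrite mulVmx.
have AY : F *m G *m (ct G *m S2 *m S1 *m ct F) = F *m S1 *m ct F.
    rewrite !mulmxA.
  by rewrite -(mulmxA F G) -(mulmxA F (G *m ct G)) E1 mulmx1.
have YA : (ct G *m S2 *m S1 *m ct F) *m (F *m G) = ct G *m S2 *m G.
    rewrite !mulmxA.
  by rewrite -(mulmxA _ (ct F) F) -(mulmxA _ S1) E2 mulmx1.
have hS1 : ct S1 = S1 by rewrite /S1 ct_inv ctM ctK.
have hS2 : ct S2 = S2 by rewrite /S2 ct_inv ctM ctK.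
have E3 : S2 *m (G *m ct G) = 1%:M by rewrite mulVmx.
split.
- rewrite AY !mulmxA -(mulmxA (F *m S1) (ct F) F) -(mulmxA F S1 (ct F *m F)) E2.
  by rewrite mulmx1.
- rewrite YA !mulmxA -(mulmxA (ct G *m S2) G (ct G)) -(mulmxA (ct G) S2 (G *m ct G)) E3.
  by rewrite mulmx1.
- rewrite AY; change (ct (F *m S1 *m ct F) = F *m S1 *m ct F).
  by rewrite !ctM ctK hS1 mulmxA.
- rewrite YA; change (ct (ct G *m S2 *m G) = ct G *m S2 *m G).
  by rewrite !ctM ctK hS2 mulmxA.
Qed.

Lemma mp_exists {n} (A : 'M[C]_n) : exists Y, is_mpinv A Y.
Proof.
set F := col_base A; set G := row_base A.
have FtF : (ct F *m F) \in unitmx.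
  apply: inj_unit => Z hZ.
  have h1 : ct (F *m Z) *m (F *m Z) = 0.
    by rewrite ctM -mulmxA (mulmxA (ct F)) hZ mulmx0.
  have hF : row_free F^T by rewrite /row_free mxrank_tr; apply: col_base_full.
  have h2 := congr1 trmx (ct_eq0 _ h1); rewrite trmx_mul trmx0 in h2.
  apply: trmx_inj; rewrite trmx0; apply/eqP; rewrite -(mulmx_free_eq0 _ hF); exact/eqP.
have GGt : (G *m ct G) \in unitmx.
  apply: inj_unit => Z hZ.
  have h1 : ct (ct G *m Z) *m (ct G *m Z) = 0.
    by rewrite ctM ctK -mulmxA (mulmxA G) hZ mulmx0.
  have h2 := congr1 ct (ct_eq0 _ h1); rewrite ctM ctK in h2.
  have h3 : ct Z = 0.
    apply/eqP; rewrite -(mulmx_free_eq0 _ (row_base_free A)) -/G h2.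
    by rewrite /ct map_mx0 trmx0.
  by rewrite -[Z]ctK h3 /ct map_mx0 trmx0.
by have := mp_fact _ _ FtF GGt; rewrite /F /G mulmx_base.
Qed.

Lemma ind_spec {n} (B : 'M[C]_n) : \rank (B ^+ ind B) = \rank (B ^+ (ind B).+1).
Proof.
rewrite /ind.
set p := (fun k => _).
have hs : has p (iota 0 n.+1).
  apply/negPn/negP => /hasPn H.
  have key : forall i, (i <= n.+1)%N -> (\rank (B ^+ i) + i <= n)%N.
    elim=> [|i IH] hi; first by rewrite expr0 addn0 mxrank1.
    have hi' : i \in iota 0 n.+1 by rewrite mem_iota.
    have /negP np := H i hi'.
    have le1 : (\rank (B ^+ i.+1) <= \rank (B ^+ i))%N.
      by rewrite exprSr -mulmxE mxrankM_maxl.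
    have lt1 : (\rank (B ^+ i.+1) < \rank (B ^+ i))%N.
      by rewrite ltn_neqAle le1 andbT eq_sym; apply/negP.
    have := IH (ltnW hi); rewrite addnS; apply: leq_trans.
    by rewrite ltn_add2r.
  by have := key n.+1 (leqnn _); rewrite addnS ltnNge leq_addl.
have := nth_find 0 hs; rewrite nth_iota ?add0n => [/eqP //|]; by move: hs; rewrite has_find size_iota.
Qed.

Lemma stab {n} (B : 'M[C]_n) j : \rank (B ^+ j) = \rank (B ^+ j.+1) ->
  forall i t, (j <= i)%N -> (B ^+ i <= B ^+ (i + t))%MS.
Proof.
move=> h.
have h0 : (B ^+ j <= B ^+ j.+1)%MS.
  have s : (B ^+ j.+1 <= B ^+ j)%MS by rewrite exprS -mulmxE submxMl.
  have := (mxrank_leqif_eq s).2; rewrite h eqxx => /esym/andP[_ ->] //.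
have hi : forall i, (j <= i)%N -> (B ^+ i <= B ^+ i.+1)%MS.
  move=> i ji; rewrite -(subnKC ji) -addSn !exprD -!mulmxE.
  exact: submxMr.
move=> i t ji; elim: t => [|t IH]; first by rewrite addn0.
apply: submx_trans IH _; rewrite addnS; apply: hi.
by rewrite (leq_trans ji) // leq_addr.
Qed.
End S.

Section Core.
Variable F : fieldType.

Lemma inj_unitF {r} (N : 'M[F]_r) : (forall Z : 'M_r, N *m Z = 0 -> Z = 0) -> N \in unitmx.
Proof.
move=> H; have := H _ (mulmx_coker N) => /eqP.
rewrite -mxrank_eq0 mxrank_coker subn_eq0 => h.
by rewrite -row_free_unit /row_free eqn_leq rank_leq_row h.
Qed.

Lemma core {n} (B Y : 'M[F]_n) (k m : nat) :
  B ^+ k *m Y *m B ^+ k = B ^+ k -> (B ^+ k <= B ^+ (k + m))%MS -> (2%:R : F) != 0 ->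
  B ^+ m + 1%:M - B ^+ k *m Y \in unitmx.
Proof.
move=> hPB hstab h2.
set P := B ^+ k *m Y.
set Q := 1%:M - P.
have -> : B ^+ m + 1%:M - P = B ^+ m + Q by rewrite /Q addrA.
have hPP : P *m P = P by rewrite /P mulmxA hPB.
have hBk : B *m B ^+ k = B ^+ k *m B by rewrite !mulmxE -exprS -exprSr.
have hBP : B *m P = P *m B *m P.
  rewrite /P !mulmxA -(mulmxA (B ^+ k *m Y) B (B ^+ k)) hBk mulmxA hPB.
  by rewrite -hBk.
have hQBk : Q *m B ^+ k = 0 by rewrite /Q /P mulmxBl mul1mx hPB subrr.
have hQP : Q *m P = 0 by rewrite /Q mulmxBl mul1mx hPP subrr.
have hQQ : Q *m Q = Q by rewrite {1}/Q mulmxBl mul1mx -/Q mulmxBr mulmx1 hPP subrr subr0.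
have hQBP : forall j, Q *m B ^+ j *m P = 0.
  elim=> [|j IH]; first by rewrite expr0 mulmx1.
  rewrite exprSr -mulmxE (mulmxA Q (B ^+ j) B) -(mulmxA (Q *m B ^+ j) B P) hBP.
  by rewrite (mulmxA (Q *m B ^+ j) (P *m B) P) (mulmxA (Q *m B ^+ j) P B) IH !mul0mx.
have hf : forall a b, Q *m B ^+ a *m Q *m B ^+ b = Q *m B ^+ (a + b).
  move=> a b; rewrite {2}/Q mulmxBr mulmx1 hQBP subr0 exprD -mulmxE mulmxA //.
apply: inj_unitF => Z hZ.
have hZ1 : B ^+ m *m Z + Q *m Z = 0 by rewrite -mulmxDl.
set z := Q *m Z in hZ1.
have hzQ : Q *m z = z by rewrite /z mulmxA hQQ.
have hZsplit : Z = z + P *m Z by rewrite /z /Q mulmxBl mul1mx subrK.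
have hz : Q *m B ^+ m *m z = - z.
  have := congr1 (mulmx Q) hZ1; rewrite mulmxDr hzQ mulmx0 => /eqP.
  rewrite addr_eq0 => /eqP <-.
  rewrite [in RHS]hZsplit !mulmxDr (mulmxA Q (B ^+ m) z) (mulmxA Q (B ^+ m) (P *m Z)).
  by rewrite (mulmxA (Q *m B ^+ m) P Z) hQBP mul0mx addr0.
have hzero : z = 0.
  have [m0|mpos] := posnP m.
    rewrite m0 expr0 mulmx1 hzQ in hz.
    have : z *+ 2 = 0 by rewrite mulr2n {1}hz addNr.
    by rewrite -scaler_nat => /eqP; rewrite scaler_eq0 (negbTE h2) => /eqP.
  have it : forall t, Q *m B ^+ (m * t) *m z = (-1) ^+ t *: z.
    elim=> [|t IH]; first by rewrite muln0 expr0 mulmx1 hzQ scale1r.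
    rewrite mulnS addnC -hf -(mulmxA (Q *m B ^+ (m * t) *m Q) (B ^+ m) z).
    rewrite -(mulmxA (Q *m B ^+ (m * t)) Q (B ^+ m *m z)) (mulmxA Q (B ^+ m) z) hz.
    by rewrite mulmxN IH exprS mulN1r scaleNr.
  have := it k; have hk : (k <= m * k)%N by rewrite leq_pmull.
  rewrite -(subnKC hk) exprD -mulmxE (mulmxA Q (B ^+ k)) hQBk !mul0mx => /esym/eqP.
  by rewrite scaler_eq0 signr_eq0 => /eqP.
have hBmZ : B ^+ m *m Z = 0 by rewrite -hZ1 hzero addr0.
have hZP : Z = P *m Z by rewrite {1}hZsplit hzero add0r.
have hw : B ^+ m *m (P *m Z) = 0 by rewrite -hZP.
rewrite /P -mulmxA in hw.
case/submxP: hstab => D hD.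
rewrite hZP /P -mulmxA hD addnC exprD -mulmxE -!mulmxA hw.
by rewrite mulmx0.
Qed.
End Core.

Theorem corollary3p8 (R : realType) (n : nat) (A W X : 'M[R[i]]_n) (m : nat) :
  is_wcEP A W X ->
  (W *m A) ^+ m + 1%:M - W *m A *m W *m X \in unitmx.
Proof.
rewrite /is_wcEP; case=> hX _.
set B := W *m A in hX *.
set k := maxn _ _ in hX.
have [Y hY] := mp_exists _ (B ^+ k).
rewrite (hX Y hY).
case: hY => P1 _ _ _.
apply: core => //.
  apply: stab (ind_spec _ B) _ _ _.
  exact: leq_maxr.
by rewrite pnatr_eq0.
Qed.
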